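(* Let $f(X)=X+\frac{1}{X}$. There are infinitely many pairs of positive rational numbers $(y,z)$ such that $f(4/3)\,f(y)=f(z)$. *)

(* Defs.v *)
From HB Require Import structures.
From mathcomp Require Import all_boot all_order all_algebra.
Set Implicit Arguments. Unset Strict Implicit. Unset Printing Implicit Defensive.
Import Order.TTheory GRing.Theory Num.Theory.
Local Open Scope ring_scope.

Definition f (x : rat) : rat := x + x^-1.

(* Main.v *)
Require Import Defs.
From HB Require Import structures.
From mathcomp Require Import all_boot all_order all_algebra.
From Stdlib Require Import ZArith Lia.
From mathcomp Require Import ssrZ ring lra.
Import Order.TTheory GRing.Theory Num.Theory.

Module ZP.
Local Open Scope Z_scope.
Definition FZ X Q := X*X*X + 674*X*X*Q - (1250*1250)*X*Q*Q - 674*(1250*1250)*Q*Q*Q.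
Definition ZcZ (n:nat) W := 2^(Z.of_nat n + 3) * W.
Definition stepZ (n:nat) (p: Z*Z*Z) : Z*Z*Z :=
  let '(X,Y,W) := p in let Zc := ZcZ n W in
  let M := 3*X*X + 1348*X*(Zc*Zc) - (1250*1250)*(Zc*Zc)*(Zc*Zc) in
  let X2 := M*M - 674*(4*(Y*Y)*(Zc*Zc)) - 8*X*(Y*Y) in
  (X2, M*(4*X*(Y*Y) - X2) - 8*(Y*Y)*(Y*Y), Y*W).
Fixpoint ptZ (n:nat) : Z*Z*Z := match n with
  | O => (1993436460625, 2553109412619865625, 3927)
  | S k => stepZ k (ptZ k) end.
Definition InvZ n (p : Z*Z*Z) := let '(X,Y,W) := p in
  Y*Y = FZ X (ZcZ n W * ZcZ n W) /\ Z.odd X = true /\ Z.odd Y = true /\ Z.odd W = true.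

Lemma key2 X Y Zc : Y*Y = FZ X (Zc*Zc) ->
  let M := 3*X*X + 1348*X*(Zc*Zc) - (1250*1250)*(Zc*Zc)*(Zc*Zc) in
  let X2 := M*M - 674*(4*(Y*Y)*(Zc*Zc)) - 8*X*(Y*Y) in
  (M*(4*X*(Y*Y) - X2) - 8*(Y*Y)*(Y*Y)) * (M*(4*X*(Y*Y) - X2) - 8*(Y*Y)*(Y*Y))
  = FZ X2 ((2*Y*Zc)*(2*Y*Zc)).
Proof.
intros H M X2. subst M X2.
replace ((2*Y*Zc)*(2*Y*Zc)) with (4*(Y*Y)*(Zc*Zc)) by ring.
rewrite H. unfold FZ. ring.
Qed.

Lemma Inv_all n : InvZ n (ptZ n).
Proof.
induction n as [|n IH].
- simpl. unfold FZ, ZcZ. vm_compute. repeat split; reflexivity.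
- simpl. destruct (ptZ n) as [[X Y] W]. destruct IH as [H [oX [oY oW]]].
  unfold stepZ, InvZ.
  assert (EZ : ZcZ (S n) (Y*W) = 2*Y*ZcZ n W).
  { unfold ZcZ. rewrite Nat2Z.inj_succ.
    replace (Z.succ (Z.of_nat n) + 3) with (Z.succ (Z.of_nat n + 3)) by lia.
    rewrite Z.pow_succ_r; [ring|lia]. }
  rewrite EZ. split; [apply key2; exact H|].
  repeat (rewrite Z.odd_sub || rewrite Z.odd_add || rewrite Z.odd_mul).
  rewrite oX oY oW. case: (Z.odd (ZcZ n W)); repeat split; reflexivity.
Qed.

Lemma parity_contra (A B C D : Z) (e k : Z) : 0 <= e -> 0 <= k ->
  Z.odd A = true -> Z.odd B = true -> Z.odd C = true -> Z.odd D = true ->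
  A * ((2^(e + (k+1)) * C) * (2^(e+(k+1)) * C)) = B * ((2^e * D) * (2^e*D)) -> False.
Proof.
intros he hk oA oB oC oD E.
rewrite Z.pow_add_r in E; try lia.
assert (E2 : (2^e*2^e) * (A*(2^(k+1)*C*(2^(k+1)*C))) = (2^e*2^e) * (B*(D*D))).
{ replace ((2^e*2^e)*(B*(D*D))) with (B*((2^e*D)*(2^e*D))) by ring. rewrite <- E. ring. }
apply Z.mul_reg_l in E2.
2:{ assert (0 < 2^e) by (apply Z.pow_pos_nonneg; lia). nia. }
apply (f_equal Z.odd) in E2.
rewrite !Z.odd_mul Z.odd_pow in E2; try lia. rewrite oA oB oD in E2. simpl in E2. discriminate.
Qed.

End ZP.
Import ZP.

Local Open Scope ring_scope.
Definition fR {R : realFieldType} (x : R) : R := x + x^-1.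
Lemma main_rat (R : realFieldType) (x yv : R) : yv^+2 = (x+674)*(x^+2 - 1250^+2) -> yv != 0 -> x + 674 != 0 ->
 let t := - yv / (50*(x+674)) in let w := t^+2 - x/1250 in let y := `|t| in
 let z := (24/25)*y/(1+y^+2+w) in
 [/\ 0<y, 0<z, fR (4%:R/3%:R) * fR y = fR z & 1250*(y^+2 - ((24/25)*y/z - 1 - y^+2)) = x].
Proof.
move=> H yv0 x0 t w y z.
have t0 : t != 0 by rewrite /t mulf_neq0 ?oppr_eq0 ?invr_eq0 ?mulf_neq0 ?pnatr_eq0.
have ypos : 0 < y by rewrite /y normr_gt0.
have y0 : y != 0 by rewrite gt_eqF.
have Y2 : y^+2 = t^+2 by rewrite /y real_normK // num_real.
have HT : t^+2 = (x^+2-1250^+2)/(2500*(x+674)).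
  have -> : t^+2 = yv^+2/(2500*(x+674)^+2) by rewrite /t; field; rewrite ?mulf_neq0 //; repeat (apply/andP; split); done.
  by rewrite H; field; rewrite ?mulf_neq0 //; repeat (apply/andP; split); done.
have Hw : w^+2 = (t^+2)^+2 + 674/625 * t^+2 + 1.
  rewrite /w HT; field; rewrite ?mulf_neq0 //; repeat (apply/andP; split); done.
set D := 1 + y^+2 + w.
have Dpos : 0 < D.
  rewrite /D Y2. have tp : 0 < t^+2 by rewrite -Y2 exprn_gt0.
  move: Hw tp; set T := t^+2; move=> Hw tp. nra.
have D0 : D != 0 by rewrite gt_eqF.
have zpos : 0 < z by rewrite /z divr_gt0 // mulr_gt0 // divr_gt0.
have key : D^+2 - 2*D*(1+y^+2) + (24/25)^+2 * y^+2 = 0.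
  have -> : D^+2 - 2*D*(1+y^+2) + (24/25)^+2 * y^+2 = w^+2 - ((y^+2)^+2 + 674/625 * y^+2 + 1).
    rewrite /D; field; rewrite ?mulf_neq0 //; repeat (apply/andP; split); done.
  by rewrite Hw Y2 subrr.
split => //.
  apply/eqP; rewrite -subr_eq0; apply/eqP.
  have -> : fR (4%:R / 3%:R) * fR y - fR z = - 0 / (24/25 * y * D).
    rewrite -[X in - X / _]key /fR /z -/D; field; rewrite ?mulf_neq0 //; repeat (apply/andP; split); done.
  by rewrite oppr0 mul0r.
have -> : 24/25*y/z = D by rewrite /z -/D; field; rewrite ?mulf_neq0 //; repeat (apply/andP; split); done.
rewrite /D /w Y2; field; rewrite ?mulf_neq0 //; repeat (apply/andP; split); done.
Qed.

Definition Zq (z : Z) : rat := (int_of_Z z)%:~R.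
Lemma iZD a b : int_of_Z (a + b)%Z = int_of_Z a + int_of_Z b. Proof. exact: (rmorphD int_of_Z). Qed.
Lemma iZB a b : int_of_Z (a - b)%Z = int_of_Z a - int_of_Z b. Proof. exact: (rmorphB int_of_Z). Qed.
Lemma iZM a b : int_of_Z (a * b)%Z = int_of_Z a * int_of_Z b. Proof. exact: (rmorphM int_of_Z). Qed.
Lemma ZqD a b : Zq (a + b)%Z = Zq a + Zq b. Proof. by rewrite /Zq iZD intrD. Qed.
Lemma ZqB a b : Zq (a - b)%Z = Zq a - Zq b. Proof. by rewrite /Zq iZB intrB. Qed.
Lemma ZqM a b : Zq (a * b)%Z = Zq a * Zq b. Proof. by rewrite /Zq iZM intrM. Qed.
Lemma Zq_inj a b : Zq a = Zq b -> a = b.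
Proof. by move/intr_inj/(can_inj int_of_ZK). Qed.
Lemma Zq674 : Zq 674 = 674. Proof. by []. Qed.
Lemma Zq1250 : Zq 1250 = 1250. Proof. by []. Qed.
Lemma Zq4 : Zq 4 = 4. Proof. by []. Qed.

Lemma hom_aff (R : realFieldType) (X Y Zc : R) : Zc != 0 ->
  Y*Y = X*X*X + 674*X*X*(Zc*Zc) - (1250*1250)*X*(Zc*Zc)*(Zc*Zc) - 674*(1250*1250)*(Zc*Zc)*(Zc*Zc)*(Zc*Zc) ->
  (Y/Zc^+3)^+2 = (X/Zc^+2 + 674)*((X/Zc^+2)^+2 - 1250^+2).
Proof.
move=> Z0 H.
have -> : (Y/Zc^+3)^+2 = (Y*Y)/Zc^+6 by field.
by rewrite H; field.
Qed.

Definition Xn n := (ptZ n).1.1.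
Definition Yn n := (ptZ n).1.2.
Definition Wn n := (ptZ n).2.
Definition Zcn n := ZcZ n (Wn n).
Definition xq n : rat := Zq (Xn n) / (Zq (Zcn n))^+2.
Definition yq n : rat := Zq (Yn n) / (Zq (Zcn n))^+3.

Lemma Inv_n n : [/\ (Yn n * Yn n = FZ (Xn n) (Zcn n * Zcn n))%Z, Z.odd (Xn n) = true,
   Z.odd (Yn n) = true & Z.odd (Wn n) = true].
Proof.
have := Inv_all n; rewrite /Zcn /Xn /Yn /Wn /InvZ.
by case: (ptZ n) => [[X Y] W] /= [H [h1 [h2 h3]]]; split.
Qed.

Lemma Zq_neq0 a : a <> 0%Z -> Zq a != 0.
Proof. by move=> a0; apply/eqP => /(@Zq_inj a 0%Z). Qed.

Lemma odd_neq0 a : Z.odd a = true -> a <> 0%Z.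
Proof. by move=> h h0; rewrite h0 in h. Qed.

Lemma Zcn_neq0 n : Zcn n <> 0%Z.
Proof.
case: (Inv_n n) => _ _ _ oW. have W0 := @odd_neq0 _ oW.
rewrite /Zcn /ZcZ. have : (0 < 2^(Z.of_nat n + 3))%Z by apply: Z.pow_pos_nonneg; lia.
move=> h. nia.
Qed.

Lemma curve_n n : [/\ (yq n)^+2 = (xq n + 674)*((xq n)^+2 - 1250^+2), yq n != 0 & xq n + 674 != 0].
Proof.
case: (Inv_n n) => H oX oY oW.
have Z0 : Zq (Zcn n) != 0 by apply: Zq_neq0; apply: Zcn_neq0.
split.
- rewrite /xq /yq; apply: hom_aff => //.
  move: (congr1 Zq H); rewrite /FZ !ZqB !ZqD !ZqM Zq674 Zq1250 => ->.
  by [].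
- rewrite /yq; apply: mulf_neq0; last by rewrite invr_eq0 expf_neq0.
  by apply: Zq_neq0; apply: odd_neq0.
- have -> : xq n + 674 = Zq (Xn n + 674 * (Zcn n * Zcn n))%Z / (Zq (Zcn n))^+2.
    rewrite /xq ZqD ZqM Zq674 (ZqM (Zcn n)); field; exact: Z0.
  apply: mulf_neq0; last by rewrite invr_eq0 expf_neq0.
  apply: Zq_neq0; apply: odd_neq0.
  by rewrite Z.odd_add Z.odd_mul oX.
Qed.

Lemma xq_inj n m : xq n = xq m -> n = m.
Proof.
wlog: n m / (leq n m).
  move=> W E; case: (leqP n m) => h; first exact: W.
  by symmetry; apply: W; [exact: ltnW | rewrite E].
rewrite leq_eqVlt => /orP [/eqP //|lt E].
exfalso.
have Zn : Zq (Zcn n) != 0 by apply: Zq_neq0; apply: Zcn_neq0.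
have Zm : Zq (Zcn m) != 0 by apply: Zq_neq0; apply: Zcn_neq0.
move: E; rewrite /xq => /eqP; rewrite eqr_div ?expf_neq0 // => /eqP.
rewrite !expr2 -!ZqM => /Zq_inj E.
case: (Inv_n n) => _ oXn _ oWn. case: (Inv_n m) => _ oXm _ oWm.
move: E; rewrite /Zcn /ZcZ.
have -> : (Z.of_nat m + 3 = (Z.of_nat n + 3) + (Z.of_nat (m - n.+1) + 1))%Z.
  have : (leq n.+1 m) := lt. move/ssrnat.leP => h. rewrite Nat2Z.inj_sub; lia.
move=> E.
apply: (@parity_contra (Xn n) (Xn m) (Wn m) (Wn n) (Z.of_nat n + 3) (Z.of_nat (m - n.+1))) => //; try lia.
Qed.

Definition tq n : rat := - yq n / (50*(xq n+674)).
Definition wq n : rat := tq n ^+2 - xq n / 1250.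
Definition yy n : rat := `|tq n|.
Definition zz n : rat := (24/25)*yy n/(1+yy n^+2+wq n).

Lemma sol n : [/\ 0 < yy n, 0 < zz n, f (4%:Q / 3%:Q) * f (yy n) = f (zz n)
   & 1250*(yy n^+2 - ((24/25)*yy n/zz n - 1 - yy n^+2)) = xq n].
Proof.
case: (curve_n n) => H y0 x0.
exact: (@main_rat rat (xq n) (yq n) H y0 x0).
Qed.

Lemma pair_inj n m : (yy n, zz n) = (yy m, zz m) -> n = m.
Proof.
case=> e1 e2; apply: xq_inj.
case: (sol n) => _ _ _ <-. case: (sol m) => _ _ _ <-.
by rewrite e1 e2.
Qed.

(* "infinitely many pairs": no finite list contains all solution pairs *)
Theorem mainTheorem8 :
  forall s : seq (rat * rat),
    exists y z : rat,
      [/\ 0 < y, 0 < z, f (4%:Q / 3%:Q) * f y = f z & (y, z) \notin s].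
Proof.
move=> s.
set L := [seq (yy n, zz n) | n <- iota 0 (size s).+1].
have uL : uniq L.
  rewrite map_inj_in_uniq ?iota_uniq // => a b _ _; exact: pair_inj.
have : ~~ all (mem s) L.
  apply/negP => /allP sub.
  have := uniq_leq_size uL sub.
  by rewrite size_map size_iota ltnn.
case/allPn => p /mapP [n _ ->] /= nin.
exists (yy n), (zz n).
by case: (sol n) => a b c _; split.
Qed.
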